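(* Let $R$ be a connected order and let $(A,G),(B,H)\in\mathcal{D}(R)$ with $H\subset G$ and $B\supset A$. Let $J=G\cap\mu(B)$. Then $G=J\times H$ (internal direct product) and $B=A[J]$ (i.e., the natural map from the group ring $A[J]$ to $B$ is a ring isomorphism).
   Context: All rings have a unit element. An order is a commutative ring whose additive group is isomorphic to $\mathbb{Z}^n$ for some $n\geq0$; it is connected if it has exactly two idempotents. $\mu(B)$ is the group of roots of unity of $B$. For a commutative ring $R$, $\mathcal{D}(R)$ is the set of pairs $(A,G)$ with $A\subset R$ a subring and $G\subset R^*$ a subgroup such that the natural map from the group ring $A[G]$ to $R$ is a ring isomorphism. *)

(* Defs.v *)
From HB Require Import structures.
From mathcomp Require Import all_boot all_order all_algebra.
Set Implicit Arguments. Unset Strict Implicit. Unset Printing Implicit Defensive.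
Import GRing.Theory.
Local Open Scope ring_scope.

Section Defs.
Variable R : comNzRingType.

Definition is_order : Prop :=
  exists (n : nat) (f : R -> 'rV[int]_n),
    {morph f : x y / x + y} /\ bijective f.

Definition connected_ring : Prop :=
  exists e1 e2 : R, e1 <> e2 /\ forall e : R, e * e = e <-> (e = e1 \/ e = e2).

Definition is_subring (A : R -> Prop) : Prop :=
  [/\ A 1, (forall x y, A x -> A y -> A (x - y)) & (forall x y, A x -> A y -> A (x * y))].

Definition is_unit_subgroup (G : R -> Prop) : Prop :=
  [/\ G 1, (forall x y, G x -> G y -> G (x * y))
     & (forall g, G g -> exists h, G h /\ g * h = 1)].

(* Elements of the group ring A[G], finitely supported, are represented by
   finite lists of pairs (a, g) with a in A and g in G, standing for the
   formal sum of the a * [g]; the natural map A[G] -> R sends it to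
   \sum a * g. *)
Definition gr_eval (s : seq (R * R)) : R := \sum_(p <- s) p.1 * p.2.

Definition gr_elt (A G : R -> Prop) (s : seq (R * R)) : Prop :=
  forall p, p \in s -> A p.1 /\ G p.2.

(* Injectivity of the natural (additive, ring) map A[G] -> R: its kernel
   is trivial, i.e. a formal sum with pairwise distinct group elements
   mapping to 0 has all coefficients 0. *)
Definition nat_map_injective (A G : R -> Prop) : Prop :=
  forall s : seq (R * R), gr_elt A G s -> uniq (map snd s) ->
    gr_eval s = 0 -> forall p, p \in s -> p.1 = 0.

Definition nat_map_onto (S A G : R -> Prop) : Prop :=
  forall r, S r -> exists s : seq (R * R), gr_elt A G s /\ r = gr_eval s.

Definition group_ring_iso (S A G : R -> Prop) : Prop :=
  nat_map_injective A G /\ nat_map_onto S A G.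

Definition in_D (A G : R -> Prop) : Prop :=
  [/\ is_subring A, is_unit_subgroup G & group_ring_iso (fun _ => True) A G].

Definition mu (B : R -> Prop) (x : R) : Prop :=
  B x /\ exists n : nat, (0 < n)%N /\ x ^+ n = 1.

End Defs.

(* Main.v *)
From HB Require Import structures.
From mathcomp Require Import all_boot all_order all_fingroup all_algebra all_solvable all_field all_character.
From mathcomp Require Import zify ring.
Require Import Defs.
From Stdlib Require Import Classical IndefiniteDescription.
Set Implicit Arguments. Unset Strict Implicit. Unset Printing Implicit Defensive.
Import Order.TTheory GRing.Theory Num.Theory.
Local Open Scope ring_scope.

Definition adj m n (X : 'M[algC]_(m, n)) : 'M[algC]_(n, m) := \matrix_(i, j) (X j i)^*.

Lemma adjE m n (X : 'M[algC]_(m, n)) i j : adj X i j = (X j i)^*.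
Proof. by rewrite mxE. Qed.
Lemma adjM m n p (X : 'M[algC]_(m, n)) (Y : 'M[algC]_(n, p)) : adj (X *m Y) = adj Y *m adj X.
Proof.
apply/matrixP => i j; rewrite !mxE rmorph_sum; apply: eq_bigr => k _.
by rewrite !mxE rmorphM mulrC.
Qed.
Lemma adjD m n (X Y : 'M[algC]_(m, n)) : adj (X + Y) = adj X + adj Y.
Proof. by apply/matrixP => i j; rewrite !mxE rmorphD. Qed.
Lemma adjN m n (X : 'M[algC]_(m, n)) : adj (- X) = - adj X.
Proof. by apply/matrixP => i j; rewrite !mxE rmorphN. Qed.
Lemma adj0 m n : adj (0 : 'M[algC]_(m, n)) = 0.
Proof. by apply/matrixP => i j; rewrite !mxE rmorph0. Qed.
Lemma adj_sum m n I (s : seq I) (F : I -> 'M[algC]_(m, n)) :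
  adj (\sum_(i <- s) F i) = \sum_(i <- s) adj (F i).
Proof. exact: (big_morph _ (@adjD m n) (@adj0 m n)). Qed.
Lemma adjZ m n c (X : 'M[algC]_(m, n)) : adj (c *: X) = c^* *: adj X.
Proof. by apply/matrixP => i j; rewrite !mxE rmorphM. Qed.
Lemma adj1 n : adj (1%:M : 'M[algC]_n) = 1%:M.
Proof. by apply/matrixP => i j; rewrite !mxE eq_sym; case: (i == j); rewrite ?rmorph1 ?rmorph0. Qed.

Definition qf n (X : 'M[algC]_n) (v : 'cV[algC]_n) : algC := (adj v *m X *m v) 0 0.
Definition psd n (X : 'M[algC]_n) := forall v, 0 <= qf X v.

Lemma qfD n (X Y : 'M[algC]_n) v : qf (X + Y) v = qf X v + qf Y v.
Proof. rewrite /qf mulmxDr mulmxDl; set P := (_ *m X *m v); set Q := (_ *m Y *m v); by rewrite mxE. Qed.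
Lemma qfB n (X Y : 'M[algC]_n) v : qf (X - Y) v = qf X v - qf Y v.
Proof. rewrite /qf mulmxBr mulmxBl; set P := (_ *m X *m v); set Q := (_ *m Y *m v); by rewrite !mxE. Qed.
Lemma qf_sum n I (s : seq I) (F : I -> 'M[algC]_n) v :
  qf (\sum_(i <- s) F i) v = \sum_(i <- s) qf (F i) v.
Proof.
apply: (big_morph (fun X => qf X v)) => [X Y|]; first exact: qfD.
by rewrite /qf mulmx0 mul0mx mxE.
Qed.
Lemma qf_adj n (X Z : 'M[algC]_n) v : qf (adj Z *m X *m Z) v = qf X (Z *m v).
Proof. by rewrite /qf adjM !mulmxA. Qed.
Lemma qf1 n (v : 'cV[algC]_n) : qf 1%:M v = \sum_i (v i 0)^* * v i 0.
Proof. rewrite /qf mulmx1 mxE; apply: eq_bigr => i _; by rewrite mxE. Qed.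
Lemma qf1_ge0 n (v : 'cV[algC]_n) : 0 <= qf 1%:M v.
Proof. rewrite qf1; apply: sumr_ge0 => i _; by rewrite mulrC mul_conjC_ge0. Qed.

Lemma psdD n (X Y : 'M[algC]_n) : psd X -> psd Y -> psd (X + Y).
Proof. by move=> hX hY v; rewrite qfD addr_ge0. Qed.
Lemma psd_sum n I (s : seq I) (F : I -> 'M[algC]_n) : (forall i, psd (F i)) -> psd (\sum_(i <- s) F i).
Proof. by move=> h v; rewrite qf_sum; apply: sumr_ge0 => i _; exact: h. Qed.
Lemma psd_adj n (X Z : 'M[algC]_n) : psd X -> psd (adj Z *m X *m Z).
Proof. by move=> h v; rewrite qf_adj. Qed.
Lemma psd1 n : psd (1%:M : 'M[algC]_n).
Proof. move=> v; exact: qf1_ge0. Qed.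
Lemma psd0 n : psd (0 : 'M[algC]_n).
Proof. by move=> v; rewrite /qf mulmx0 mul0mx mxE. Qed.

Lemma psd_zero n (H Y : 'M[algC]_n) : psd (H - 1%:M) ->
  (forall v, qf (adj Y *m H *m Y) v = 0) -> Y = 0.
Proof.
move=> hH h; apply/matrixP => i j; rewrite mxE.
pose v : 'cV[algC]_n := delta_mx j 0.
have e := h v; rewrite qf_adj in e.
have e1 : qf 1%:M (Y *m v) = 0.
  have := hH (Y *m v); rewrite qfB e sub0r oppr_ge0 => h1.
  by apply/eqP; rewrite eq_le h1 qf1_ge0.
rewrite qf1 in e1.
have h0 : forall k : 'I_n, xpredT k -> 0 <= ((Y *m v) k 0)^* * (Y *m v) k 0.
  by move=> k _; rewrite mulrC mul_conjC_ge0.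
have := psumr_eq0P h0 e1 (i := i) isT.
have -> : (Y *m v) i 0 = Y i j.
  rewrite mxE (bigD1 j) //= big1 ?addr0 => [|k /negPf hk]; rewrite !mxE ?eqxx ?mulr1 //.
  by rewrite hk mulr0.
by rewrite mulrC => /eqP; rewrite mul_conjC_eq0 => /eqP.
Qed.

Lemma psd_bound n (H Z : 'M[algC]_n) : psd (H - 1%:M) -> psd (H - adj Z *m H *m Z) ->
  forall i j, `|Z i j| ^+ 2 <= H j j.
Proof.
move=> hH hZ i j.
pose v : 'cV[algC]_n := delta_mx j 0.
have cv : Z *m v = col j Z by rewrite colE.
have av : adj v = delta_mx 0 j.
  apply/matrixP => a b; rewrite !mxE andbC.
  by case: (_ && _); rewrite ?conjC1 ?conjC0.
have hv : qf H v = H j j by rewrite /qf av -rowE -colE !mxE.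
have h1 := hZ v; rewrite qfB qf_adj subr_ge0 hv in h1.
have h2 := hH (Z *m v); rewrite qfB subr_ge0 in h2.
apply: le_trans h1; apply: le_trans h2.
rewrite qf1 (bigD1 i) //= -[X in X <= _]addr0 lerD //.
  by rewrite normCK cv mxE mulrC.
by apply: sumr_ge0 => k _; rewrite mulrC mul_conjC_ge0.
Qed.

Lemma psd_pow n (H Y : 'M[algC]_n.+1) k : psd (H - adj Y *m H *m Y) ->
  psd (H - adj (Y ^+ k) *m H *m (Y ^+ k)).
Proof.
move=> h; elim: k => [|k IH].
  by rewrite expr0 adj1 mulmx1 mul1mx subrr; exact: psd0.
have -> : H - adj (Y ^+ k.+1) *m H *m Y ^+ k.+1 =
    (H - adj Y *m H *m Y) + adj Y *m (H - adj (Y ^+ k) *m H *m Y ^+ k) *m Y.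
  rewrite exprSr -mulmxE adjM mulmxBr mulmxBl !mulmxA.
  by rewrite addrA subrK.
by apply: psdD => //; exact: psd_adj.
Qed.

Lemma psd_sumP n (I : finType) (P : pred I) (F : I -> 'M[algC]_n) :
  (forall i, P i -> psd (F i)) -> psd (\sum_(i | P i) F i).
Proof.
move=> h; rewrite big_mkcond /=; apply: psd_sum => i.
by case: ifP => hi; [exact: h | exact: psd0].
Qed.

Lemma qf_sumP n (I : finType) (P : pred I) (F : I -> 'M[algC]_n) v :
  qf (\sum_(i | P i) F i) v = \sum_(i | P i) qf (F i) v.
Proof.
apply: (big_morph (fun X => qf X v)) => [X Y|]; first exact: qfD.
by rewrite /qf mulmx0 mul0mx mxE.
Qed.

Section Coord.
Variable R : comNzRingType.
Variables (N : nat) (f : R -> 'rV[int]_N.+1) (g : 'rV[int]_N.+1 -> R).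
Hypotheses (fD : {morph f : x y / x + y}) (fK : cancel f g) (gK : cancel g f).

Lemma f_inj : injective f. Proof. exact: can_inj fK. Qed.
Lemma f0 : f 0 = 0.
Proof. have h := fD 0 0; rewrite addr0 in h; apply: (addrI (f 0)); by rewrite addr0 -h. Qed.
Lemma fN x : f (- x) = - f x.
Proof. apply: (addrI (f x)); by rewrite -fD !subrr f0. Qed.
Lemma f_sum I (s : seq I) (P : pred I) (F : I -> R) :
  f (\sum_(i <- s | P i) F i) = \sum_(i <- s | P i) f (F i).
Proof. exact: (big_morph f fD f0). Qed.
Lemma fMn x k : f (x *+ k) = f x *+ k.
Proof. elim: k => [|k IH]; first by rewrite !mulr0n f0. by rewrite !mulrS fD IH. Qed.
Lemma fMz x z : f (x *~ z) = f x *~ z.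
Proof. case: z => k; first by rewrite -!pmulrn fMn. by rewrite !NegzE !mulrNz fN -!pmulrn fMn. Qed.
Lemma gD v w : g (v + w) = g v + g w.
Proof. by apply: f_inj; rewrite fD !gK. Qed.
Lemma gMz v z : g (v *~ z) = g v *~ z.
Proof. by apply: f_inj; rewrite fMz !gK. Qed.
Lemma g_sum I (s : seq I) (F : I -> 'rV[int]_N.+1) :
  g (\sum_(i <- s) F i) = \sum_(i <- s) g (F i).
Proof. apply: (big_morph g gD); by apply: f_inj; rewrite gK f0. Qed.

Definition Mint (a : R) : 'M[int]_N.+1 := \matrix_(i, j) f (a * g 'e_i) 0 j.

Lemma f_mul a x : f (a * x) = f x *m Mint a.
Proof.
rewrite -{1}[x]fK [f x]row_sum_delta g_sum mulr_sumr f_sum mulmx_sum_row.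
apply: eq_bigr => j _.
have -> : (f x 0 j) *: 'e_j = 'e_j *~ (f x 0 j) :> 'rV[int]_N.+1 by rewrite -scaler_int intz.
rewrite gMz mulrzAr fMz -scaler_int intz; congr (_ *: _).
- by rewrite -row_sum_delta.
- by apply/rowP => k; rewrite !mxE.
Qed.

Lemma Mint_eq (P Q : 'M[int]_N.+1) : (forall x, f x *m P = f x *m Q) -> P = Q.
Proof.
move=> h; apply/row_matrixP => i; rewrite !rowE.
by have := h (g 'e_i); rewrite gK.
Qed.

Lemma MintM a b : Mint (a * b) = Mint a *m Mint b.
Proof. apply: Mint_eq => x; rewrite mulmxA -!f_mul; congr (f _); by rewrite [RHS]mulrCA mulrA. Qed.
Lemma MintD a b : Mint (a + b) = Mint a + Mint b.
Proof. apply: Mint_eq => x; by rewrite -f_mul mulrDl fD !f_mul mulmxDr. Qed.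
Lemma Mint1 : Mint 1 = 1.
Proof. apply: Mint_eq => x; by rewrite -f_mul mul1r mulmx1. Qed.
Lemma Mint0 : Mint 0 = 0.
Proof. apply: Mint_eq => x; by rewrite -f_mul mul0r f0 mulmx0. Qed.
Lemma Mint_inj : injective Mint.
Proof. move=> a b h; apply: f_inj; by rewrite -[a]mulr1 -[b]mulr1 !f_mul h. Qed.
Lemma MintC a b : Mint a *m Mint b = Mint b *m Mint a.
Proof. by rewrite -!MintM mulrC. Qed.

Lemma intr_R_eq0 (z : int) : z%:~R = 0 :> R -> z = 0.
Proof.
move=> h; have : f (1 *~ z) = 0 by rewrite h f0.
rewrite fMz => /rowP h2.
have f1 : f 1 != 0.
  apply/eqP => e; have : f 1 = f 0 by rewrite f0.
  by move/f_inj/eqP; rewrite oner_eq0.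
have [j hj] : exists j, f 1 0 j != 0.
  apply/existsP; apply: contraR f1 => /existsPn hn; apply/eqP/rowP => j.
  by rewrite mxE; apply/eqP/negPn/hn.
move: (h2 j); rewrite -scaler_int intz !mxE => /eqP; rewrite mulf_eq0 (negPf hj) orbF; by move/eqP.
Qed.
End Coord.

Section RingFacts.
Variable R : comNzRingType.

Lemma nilp_ge (a : R) p k : a ^+ p = 0 -> (p <= k)%N -> a ^+ k = 0.
Proof. by move=> h hk; rewrite -(subnKC hk) exprD h mul0r. Qed.

Lemma nilpD (a b : R) p q : a ^+ p = 0 -> b ^+ q = 0 -> (a + b) ^+ (p + q) = 0.
Proof.
move=> ha hb; rewrite exprDn big1 // => i _.
have [iq|iq] := leqP q i; first by rewrite (nilp_ge hb iq) mulr0 mul0rn.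
rewrite (nilp_ge (k := (p + q - i)%N) ha) ?mul0r ?mul0rn //.
lia.
Qed.

Lemma nilp_sum I (s : seq I) (F : I -> R) : (forall i, exists E, F i ^+ E = 0) ->
  exists E, (\sum_(i <- s) F i) ^+ E = 0.
Proof.
move=> h; elim: s => [|i s [E hE]]; first by exists 1%N; rewrite big_nil expr1.
have [E' hE'] := h i; exists (E' + E)%N; rewrite big_cons; exact: nilpD.
Qed.

Lemma period_shift (a : R) i p : a ^+ (i + p) = a ^+ i -> forall r q, a ^+ (i + r + q * p) = a ^+ (i + r).
Proof.
move=> h r; elim=> [|q IH]; first by rewrite mul0n addn0.
rewrite mulSn; have -> : (i + r + (p + q * p) = (i + p) + (r + q * p))%N by lia.
rewrite exprD h -exprD; have -> : (i + (r + q * p) = i + r + q * p)%N by lia.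
exact: IH.
Qed.

Lemma period_idem (a : R) i j : (i < j)%N -> a ^+ i = a ^+ j ->
  exists E, (0 < E)%N /\ a ^+ E * a ^+ E = a ^+ E.
Proof.
move=> ij e; set p := (j - i)%N.
have hp : a ^+ (i + p) = a ^+ i by rewrite subnKC ?(ltnW ij).
have p0 : (0 < p)%N by rewrite subn_gt0.
exists (i.+1 * p)%N; split; first by rewrite muln_gt0.
have iE : (i <= i.+1 * p)%N by rewrite (leq_trans (leqnSn i)) // leq_pmulr.
rewrite -exprD; have -> : (i.+1 * p + i.+1 * p = i + (i.+1 * p - i) + i.+1 * p)%N by lia.
rewrite (period_shift hp); congr (_ ^+ _); lia.
Qed.
End RingFacts.

Section Fin.
Variable R : comNzRingType.
Variables (N : nat) (f : R -> 'rV[int]_N.+1) (g : 'rV[int]_N.+1 -> R).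
Hypotheses (fD : {morph f : x y / x + y}) (fK : cancel f g) (gK : cancel g f).
Variables (A G : R -> Prop).
Hypothesis A_int : forall z : int, A z%:~R.
Hypothesis inj : nat_map_injective A G.

Lemma G_bounded_eq (s : seq R) : uniq s -> (forall x, x \in s -> G x) -> size s = N.+2 -> False.
Proof.
move=> us sG ss.
pose V : 'M[rat]_(N.+2, N.+1) := \matrix_(i, j) (f (nth 0 s i) 0 j)%:~R.
pose Vi : 'M[int]_(N.+2, N.+1) := \matrix_(i, j) (f (nth 0 s i) 0 j).
have hV : V = map_mx intr Vi by apply/matrixP => i j; rewrite !mxE.
have K0 : kermx V != 0.
  rewrite kermx_eq0 /row_free; apply/negP => /eqP e.
  by have := rank_leq_col V; rewrite e ltnn.
have [w [hi0 wV]] : exists w : 'rV_N.+2, w != 0 /\ w *m V = 0.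
  have [i0 hi0] : exists i, row i (kermx V) != 0.
    apply/existsP; apply: contraR K0 => /existsPn hn; apply/eqP/row_matrixP => i.
    by rewrite row0; apply/eqP/negPn/hn.
  by exists (row i0 (kermx V)); split => //; rewrite -row_mul mulmx_ker row0.
pose D : int := \prod_j denq (w 0 j).
pose wz : 'rV[int]_(N.+2) := \row_j (numq (w 0 j) * \prod_(k | k != j) denq (w 0 k)).
have hwz : map_mx intr wz = (D%:~R : rat) *: w.
  apply/rowP => j; rewrite !mxE /D [in RHS](bigD1 j) //= !intrM numqE.
  by rewrite [RHS]mulrC mulrA.
have D0 : (D%:~R : rat) != 0.
  rewrite intr_eq0 /D; apply/prodf_neq0 => k _; exact: lt0r_neq0 (denq_gt0 _).
have wz0 : wz != 0.
  apply: contra hi0 => /eqP e; move: hwz; rewrite e map_mx0 => /esym/eqP.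
  by rewrite scaler_eq0 (negPf D0).
have wzV : wz *m Vi = 0.
  have e : map_mx intr (wz *m Vi) = 0 :> 'rV[rat]_N.+1.
    by rewrite map_mxM /= hwz -hV -scalemxAl wV scaler0.
  apply/rowP => j; have := congr1 (fun M : 'rV[rat]_N.+1 => M 0 j) e.
  by rewrite /= !mxE => /eqP; rewrite intr_eq0 => /eqP.
have sum0 : \sum_(i < N.+2) (wz 0 i)%:~R * nth 0 s i = 0.
  apply: (f_inj fK); rewrite f0 // f_sum //.
  have := wzV; rewrite mulmx_sum_row => e; rewrite -[RHS]e; apply: eq_bigr => i _.
  rewrite mulrzl fMz // -scaler_int intz; congr (_ *: _).
  by apply/rowP => j; rewrite !mxE.
pose L := [seq (((wz 0 i)%:~R : R), nth 0 s i) | i <- enum 'I_N.+2].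
have LA : gr_elt A G L.
  move=> p /mapP [i _ ->] /=; split; first exact: A_int.
  by apply: sG; apply: mem_nth; rewrite ss.
have Lu : uniq (map snd L).
  rewrite -map_comp; rewrite map_inj_in_uniq ?enum_uniq // => i j _ _ /= e.
  by apply: val_inj; apply/eqP; rewrite -(nth_uniq 0 _ _ us) ?ss ?ltn_ord // e.
have Le : gr_eval L = 0 by rewrite /gr_eval big_map big_enum /=.
apply/negP: wz0; rewrite negbK; apply/eqP/rowP => j; rewrite [RHS]mxE.
apply: (intr_R_eq0 fD fK).
apply: (inj LA Lu Le (p := (((wz 0 j)%:~R : R), nth 0 s j))).
by apply/mapP; exists j; rewrite ?mem_enum.
Qed.

Lemma G_finite : exists l : seq R, uniq l /\ forall x, G x <-> x \in l.
Proof.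
apply: NNPP => hn.
have step : forall l : seq R, uniq l -> (forall x, x \in l -> G x) ->
    exists x, G x /\ x \notin l.
  move=> l ul lG; apply: NNPP => h; apply: hn; exists l; split => // x; split => [Gx|]; last exact: lG.
  by apply: NNPP => nx; apply: h; exists x; split => //; apply/negP.
have : forall k, exists l : seq R, [/\ uniq l, (forall x, x \in l -> G x) & size l = k].
  elim=> [|k [l [ul lG sl]]]; first by exists [::].
  have [x [Gx nx]] := step l ul lG.
  exists (x :: l); split => //=; first by rewrite nx.
    by move=> y; rewrite inE => /orP [/eqP -> // | /lG].
  by rewrite sl.
move=> /(_ N.+2) [l [ul lG sl]]; exact: (G_bounded_eq ul lG sl).
Qed.
End Fin.

Section TL.
Variable R : comNzRingType.
Variables (N : nat) (f : R -> 'rV[int]_N.+1) (g : 'rV[int]_N.+1 -> R).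
Hypotheses (fD : {morph f : x y / x + y}) (fK : cancel f g) (gK : cancel g f).
Variables (A G : R -> Prop).
Hypotheses (A1 : A 1) (AB : forall x y, A x -> A y -> A (x - y))
  (AM : forall x y, A x -> A y -> A (x * y)).
Hypotheses (inj : nat_map_injective A G) (onto : nat_map_onto (fun _ => True) A G).
Hypotheses (G1 : G 1) (GM : forall x y, G x -> G y -> G (x * y))
  (GV : forall x, G x -> exists y, G y /\ x * y = 1).
Variable l : seq R.
Hypotheses (ul : uniq l) (lG : forall x, G x <-> x \in l).
Hypothesis idem : forall e : R, e * e = e -> e = 0 \/ e = 1.

Lemma A0 : A 0. Proof. by rewrite -(subrr 1); apply: AB. Qed.
Lemma AN x : A x -> A (- x). Proof. by move=> h; rewrite -sub0r; apply: AB => //; apply: A0. Qed.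
Lemma AD x y : A x -> A y -> A (x + y).
Proof. by move=> hx hy; rewrite -[y]opprK; apply: AB => //; apply: AN. Qed.
Lemma A_sum I (s : seq I) (P : pred I) (F : I -> R) :
  (forall i, P i -> A (F i)) -> A (\sum_(i <- s | P i) F i).
Proof. move=> h; apply: big_ind => //; [exact: A0 | exact: AD]. Qed.
Lemma AX x k : A x -> A (x ^+ k).
Proof. move=> h; elim: k => [|k IH]; by rewrite ?expr0 // exprS; apply: AM. Qed.

Lemma l1 : (1 : R) \in l. Proof. by apply/lG. Qed.
Lemma lM x y : x \in l -> y \in l -> x * y \in l.
Proof. by move=> /lG hx /lG hy; apply/lG; apply: GM. Qed.
Lemma lV x : x \in l -> exists y, (y \in l) && (x * y == 1).
Proof. by move=> /lG /GV [y [Gy e]]; exists y; rewrite e eqxx andbT; apply/lG. Qed.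

Definition gT := seq_sub l.
HB.instance Definition _ := Finite.copy gT (seq_sub l).
HB.instance Definition _ := SubType.copy gT (seq_sub l).
Definition gmul (a b : gT) : gT := SeqSub (lM (ssvalP a) (ssvalP b)).
Definition gone : gT := SeqSub l1.
Definition ginv (a : gT) : gT := SeqSub (proj1 (andP (xchooseP (lV (ssvalP a))))).
Lemma gmulA : associative gmul.
Proof. by move=> a b c; apply: val_inj; rewrite /= mulrA. Qed.
Lemma gmul1 : left_id gone gmul.
Proof. by move=> a; apply: val_inj; rewrite /= mul1r. Qed.
Lemma gmulV : left_inverse gone ginv gmul.
Proof. move=> a; apply: val_inj => /=. rewrite mulrC. exact: (eqP (proj2 (andP (xchooseP (lV (ssvalP a)))))). Qed.
HB.instance Definition _ := Finite_isGroup.Build gT gmulA gmul1 gmulV.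
Lemma gabelian : abelian [set: gT].
Proof. apply/centsP => a _ b _; apply: val_inj => /=. exact: mulrC. Qed.

Lemma valM (s t : gT) : val (s * t)%g = val s * val t. Proof. by []. Qed.
Lemma val1 : val (1%g : gT) = 1. Proof. by []. Qed.
Lemma valX (s : gT) k : val (s ^+ k)%g = val s ^+ k.
Proof. elim: k => [|k IH]; first by rewrite expg0 expr0. by rewrite expgS valM IH exprS. Qed.
Lemma valV (s : gT) : val (s^-1)%g * val s = 1.
Proof. by rewrite -valM mulVg. Qed.
Lemma Gval (s : gT) : G (val s). Proof. by apply/lG; apply: ssvalP. Qed.
Lemma inT x : G x -> exists t : gT, val t = x.
Proof. by move=> /lG h; exists (SeqSub h). Qed.

Lemma coef_uniq0 (c : gT -> R) : (forall t, A (c t)) ->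
  \sum_t c t * val t = 0 -> forall t, c t = 0.
Proof.
move=> cA s0 t.
pose L := [seq (c t, val t) | t <- index_enum gT].
have LA : gr_elt A G L by move=> p /mapP [u _ ->]; split; [exact: cA | exact: Gval].
have Lu : uniq (map snd L).
  by rewrite -map_comp map_inj_uniq ?index_enum_uniq //; exact: val_inj.
have Le : gr_eval L = 0 by rewrite /gr_eval big_map.
by apply: (inj LA Lu Le (p := (c t, val t))); apply/mapP; exists t; rewrite ?mem_index_enum.
Qed.

Lemma coef_ex r : exists c : {ffun gT -> R}, (forall t, A (c t)) /\ r = \sum_t c t * val t.
Proof.
have [s [sA ->]] := onto (r := r) I.
elim: s sA => [|p s IH] sA.
  exists [ffun=> 0]; split => [t|]; first by rewrite ffunE; exact: A0.
  by rewrite /gr_eval big_nil big1 // => t _; rewrite ffunE mul0r.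
have [c [cA ce]] : exists c : {ffun gT -> R}, (forall t, A (c t)) /\ gr_eval s = \sum_t c t * val t.
  by apply: IH => q hq; apply: sA; rewrite inE hq orbT.
have [pA pG] := sA p (mem_head _ _).
have [t0 e0] := inT pG.
exists [ffun t => c t + (if t == t0 then p.1 else 0)]; split.
  by move=> t; rewrite ffunE; apply: AD => //; case: ifP => _ //; exact: A0.
rewrite /gr_eval big_cons -/(gr_eval s) ce.
under [RHS]eq_bigr => t _ do rewrite ffunE mulrDl.
rewrite big_split /= addrC; congr (_ + _).
rewrite (bigD1 t0) //= eqxx big1 ?addr0 ?e0 // => t /negPf ->; by rewrite mul0r.
Qed.

Definition coef (r : R) : {ffun gT -> R} := proj1_sig (constructive_indefinite_description _ (coef_ex r)).
Lemma coefA r t : A (coef r t).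
Proof. exact: (proj1 (proj2_sig (constructive_indefinite_description _ (coef_ex r))) t). Qed.
Lemma coefE r : r = \sum_t coef r t * val t.
Proof. exact: (proj2 (proj2_sig (constructive_indefinite_description _ (coef_ex r)))). Qed.
Lemma coef_uniq r (c : gT -> R) : (forall t, A (c t)) -> r = \sum_t c t * val t ->
  forall t, coef r t = c t.
Proof.
move=> cA e t; apply/eqP; rewrite -subr_eq0; apply/eqP; move: t.
apply: coef_uniq0 => [t|]; first by apply: AB => //; exact: coefA.
under eq_bigr => t _ do rewrite mulrBl.
by rewrite sumrB -coefE -e subrr.
Qed.

Lemma coefD r q t : coef (r + q) t = coef r t + coef q t.
Proof.
apply: (coef_uniq (c := fun s => coef r s + coef q s)) => [s|]; first by apply: AD; exact: coefA.
under eq_bigr => s _ do rewrite mulrDl.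
by rewrite big_split -!coefE.
Qed.
Lemma coef0 t : coef 0 t = 0.
Proof. apply: (coef_uniq (c := fun _ => 0)) => [s|]; first exact: A0. by rewrite big1 // => s _; rewrite mul0r. Qed.
Lemma coef_sum I (s : seq I) (F : I -> R) t :
  coef (\sum_(i <- s) F i) t = \sum_(i <- s) coef (F i) t.
Proof. by apply: (big_morph (fun r => coef r t)) => [r q|]; rewrite ?coefD ?coef0. Qed.
Lemma coef1 t : coef 1 t = (t == 1%g)%:R.
Proof.
apply: (coef_uniq (c := fun s => (s == 1%g)%:R)) => [s|]; first by case: (s == 1%g); [exact: A1 | exact: A0].
rewrite (bigD1 1%g) //= eqxx mul1r big1 ?addr0 // => s /negPf ->; by rewrite mul0r.
Qed.
Lemma coef_mulA b r t : A b -> coef (b * r) t = b * coef r t.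
Proof.
move=> hb; apply: (coef_uniq (c := fun s => b * coef r s)) => [s|]; first by apply: AM => //; exact: coefA.
by rewrite {1}[r]coefE mulr_sumr; apply: eq_bigr => s _; rewrite mulrA.
Qed.
Lemma coef_mulT (s : gT) r t : coef (val s * r) t = coef r ((s^-1) * t)%g.
Proof.
apply: (coef_uniq (c := fun u => coef r (s^-1 * u)%g)) => [u|]; first exact: coefA.
rewrite {1}[r]coefE mulr_sumr (reindex_inj (mulgI s^-1)%g) /=.
apply: eq_bigr => u _ /=; rewrite mulrCA; congr (_ * _).
by rewrite mulrA (eqP (proj2 (andP (xchooseP (lV (ssvalP s)))))) mul1r.
Qed.
Lemma coef_mul r q t : coef (r * q) t = \sum_s coef r s * coef q ((s^-1) * t)%g.
Proof.
rewrite {1}[r]coefE mulr_suml coef_sum; apply: eq_bigr => s _.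
rewrite -mulrA coef_mulA; [congr (_ * _); exact: coef_mulT | exact: coefA].
Qed.
Lemma coef_inj r q : (forall t, coef r t = coef q t) -> r = q.
Proof. by move=> h; rewrite [r]coefE [q]coefE; apply: eq_bigr => t _; rewrite h. Qed.


Local Notation Gset := (setT : {set gT}).
Lemma chi_lin (i : Iirr Gset) : 'chi_i \is a linear_char.
Proof. exact/char_abelianP/gabelian. Qed.
Lemma chiM (i : Iirr Gset) (s t : gT) : 'chi_i (s * t)%g = 'chi_i s * 'chi_i t.
Proof. by rewrite (lin_charM (chi_lin i)) ?inE. Qed.
Lemma chi1 (i : Iirr Gset) : 'chi_i 1%g = 1.
Proof. exact: lin_char1 (chi_lin i). Qed.
Lemma card_Iirr : #|Iirr Gset| = #|Gset|.
Proof. by rewrite card_Iirr_abelian //; exact: gabelian. Qed.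
Lemma orth (s t : gT) : \sum_(i : Iirr Gset) ('chi_i s)^* * 'chi_i t = (#|Gset|%:R) *+ (s == t).
Proof.
under eq_bigr => i _ do rewrite mulrC.
rewrite second_orthogonality_relation ?inE //.
have -> : (t \in s ^: Gset)%g = (s == t).
  by move/abelian_classP: gabelian => h; rewrite h ?inE // eq_sym.
congr (_ *+ _); congr (_%:R).
suff -> : ('C_Gset[t])%g = Gset by [].
apply/setP => y; rewrite in_setI in_setT /=.
by apply/cent1P; apply: val_inj; rewrite /= mulrC.
Qed.

Definition MC (a : R) : 'M[algC]_N.+1 := map_mx (intr : int -> algC) (Mint f g a).
Lemma MCM a b : MC (a * b) = MC a * MC b.
Proof. by rewrite /MC (MintM fD fK gK) map_mxM. Qed.
Lemma MCD a b : MC (a + b) = MC a + MC b.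
Proof. by rewrite /MC (MintD fD fK gK) map_mxD. Qed.
Lemma MC1 : MC 1 = 1.
Proof. by rewrite /MC (Mint1 fD fK gK) map_mx1. Qed.
Lemma MC0 : MC 0 = 0.
Proof. by rewrite /MC (Mint0 fD fK gK) map_mx0. Qed.
Lemma MC_sum I (s : seq I) (F : I -> R) : MC (\sum_(i <- s) F i) = \sum_(i <- s) MC (F i).
Proof. exact: (big_morph MC MCD MC0). Qed.
Lemma MCX a k : MC (a ^+ k) = MC a ^+ k.
Proof. elim: k => [|k IH]; by rewrite ?expr0 ?MC1 // !exprS MCM IH. Qed.
Lemma MCC a b : MC a * MC b = MC b * MC a.
Proof. by rewrite -!MCM mulrC. Qed.
Lemma MC_inj a b : MC a = MC b -> a = b.
Proof.
move=> h; apply: (Mint_inj fD fK gK); apply/matrixP => i j.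
have := congr1 (fun M : 'M[algC]_N.+1 => M i j) h; rewrite /= !mxE => /eqP.
by rewrite eqr_int => /eqP.
Qed.

Definition Phi (i : Iirr Gset) (r : R) : 'M[algC]_N.+1 := \sum_t 'chi_i t *: MC (coef r t).
Lemma Phi1 i : Phi i 1 = 1.
Proof.
rewrite /Phi (bigD1 1%g) //= coef1 eqxx MC1 chi1 scale1r big1 ?addr0 // => t /negPf ht.
by rewrite coef1 ht MC0 scaler0.
Qed.
Lemma PhiM i r q : Phi i (r * q) = Phi i r * Phi i q.
Proof.
rewrite /Phi [RHS]mulr_suml.
under eq_bigr => z _ do rewrite coef_mul MC_sum scaler_sumr.
rewrite exchange_big /=; apply: eq_bigr => s _.
rewrite [RHS]mulr_sumr (reindex_inj (mulgI s)) /=; apply: eq_bigr => w _.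
by rewrite mulKg MCM chiM -scalerAl -scalerAr scalerA.
Qed.
Lemma PhiX i r k : Phi i (r ^+ k) = Phi i r ^+ k.
Proof. elim: k => [|k IH]; by rewrite ?expr0 ?Phi1 // !exprS PhiM IH. Qed.
Lemma PhiC i j r q : Phi i r * Phi j q = Phi j q * Phi i r.
Proof.
rewrite /Phi mulr_suml mulr_sumr; apply: eq_bigr => s _.
rewrite mulr_suml mulr_sumr; apply: eq_bigr => t _.
by rewrite -!scalerAl -!scalerAr !scalerA mulrC MCC.
Qed.

Lemma shift_sum (F : nat -> 'M[algC]_N.+1) m : F m = F 0%N ->
  \sum_(k < m) F k.+1 = \sum_(k < m) F k.
Proof.
case: m => [|m] e; first by rewrite !big_ord0.
by rewrite big_ord_recr big_ord_recl /= e addrC.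
Qed.

Lemma expand_bil (a b : gT -> algC) (P Q : gT -> 'M[algC]_N.+1) (H : 'M[algC]_N.+1) :
  (\sum_s a s *: P s) *m H *m (\sum_t b t *: Q t) =
  \sum_s \sum_t (a s * b t) *: (P s *m H *m Q t).
Proof.
rewrite mulmx_suml mulmx_suml; apply: eq_bigr => s _.
rewrite mulmx_sumr; apply: eq_bigr => t _.
by rewrite -scalemxAl -scalemxAl -scalemxAr scalerA.
Qed.

Lemma int_small (z : int) (B : nat) : `|(z%:~R : algC)| ^+ 2 < B%:R -> (absz z < B)%N.
Proof.
rewrite -intr_norm -abszE -natrX ltr_nat => h.
apply: leq_ltn_trans h; case: (absz z) => // k.
by rewrite expnS leq_pmulr // expn_gt0.
Qed.

Section Tors.
Variables (u : R) (m : nat).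
Hypotheses (m0 : (0 < m)%N) (um : u ^+ m = 1).

Definition alpha i := Phi i u.
Lemma alpham i : alpha i ^+ m = 1.
Proof. by rewrite /alpha -PhiX um Phi1. Qed.
Lemma alphaC i j : alpha i * alpha j = alpha j * alpha i.
Proof. exact: PhiC. Qed.

Fixpoint Hl (s : seq (Iirr Gset)) : 'M[algC]_N.+1 :=
  match s with
  | [::] => 1
  | i :: s' => \sum_(k < m) adj (alpha i ^+ k) *m Hl s' *m alpha i ^+ k
  end.

Lemma Hl_psd s : psd (Hl s - 1%:M).
Proof.
elim: s => [|i s IH] /=; first by rewrite subrr; exact: psd0.
have pH : psd (Hl s) by rewrite -[Hl s](subrK 1%:M); apply: psdD => //; exact: psd1.
case: m m0 => // m' _.
rewrite big_ord_recl /= expr0 adj1 mulmx1 mul1mx addrAC.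
by apply: psdD => //; apply: psd_sum => k; exact: psd_adj.
Qed.

Lemma conj_comm (X Y K : 'M[algC]_N.+1) : X * Y = Y * X ->
  adj Y *m (adj X *m K *m X) *m Y = adj X *m (adj Y *m K *m Y) *m X.
Proof.
move=> c; have c' : X *m Y = Y *m X by rewrite mulmxE.
have e1 P Q : adj Q *m (adj P *m K *m P) *m Q = adj (P *m Q) *m K *m (P *m Q).
  by rewrite !adjM !mulmxA.
by rewrite !e1 c'.
Qed.

Lemma Hl_inv s j : j \in s -> adj (alpha j) *m Hl s *m alpha j = Hl s.
Proof.
elim: s => [|i s IH] //= hj.
rewrite (mulmx_sumr (adj (alpha j))) (mulmx_suml (alpha j)).
under [LHS]eq_bigr => k _ do rewrite (conj_comm _ (esym (commrX k (alphaC j i)))).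
have [ji|nji] := eqVneq j i.
  subst j.
  have e k : adj (alpha i ^+ k) *m (adj (alpha i) *m Hl s *m alpha i) *m alpha i ^+ k
      = adj (alpha i ^+ k.+1) *m Hl s *m alpha i ^+ k.+1.
    by rewrite exprS -mulmxE adjM !mulmxA.
  under eq_bigr => k _ do rewrite e.
  apply: (shift_sum (F := fun k => adj (alpha i ^+ k) *m Hl s *m alpha i ^+ k)).
  by rewrite alpham expr0.
move: hj; rewrite inE (negPf nji) /= => /IH ->.
by [].
Qed.

Definition Hm := Hl (enum (Iirr Gset)).
Definition Yc t := MC (coef u t).

Lemma parseval : \sum_t adj (Yc t) *m Hm *m Yc t = Hm.
Proof.
have e1 : \sum_i adj (alpha i) *m Hm *m alpha i = #|Gset|%:R *: Hm.
  rewrite (eq_bigr (fun _ => Hm)) => [|i _]; last by apply: Hl_inv; rewrite mem_enum.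
  by rewrite sumr_const card_Iirr scaler_nat.
have e2 : \sum_i adj (alpha i) *m Hm *m alpha i = #|Gset|%:R *: \sum_t adj (Yc t) *m Hm *m Yc t.
  under eq_bigr => i _ do rewrite /alpha /Phi adj_sum.
  under eq_bigr => i _ do (under eq_bigr => s _ do rewrite adjZ; rewrite expand_bil).
  rewrite exchange_big /= scaler_sumr; apply: eq_bigr => s _.
  rewrite exchange_big /=.
  under eq_bigr => t _ do rewrite -scaler_suml orth.
  rewrite (bigD1 s) //= eqxx mulr1n big1 ?addr0 // => t /negPf nt.
  by rewrite eq_sym nt mulr0n scale0r.
have n0 : (#|Gset|%:R : algC) != 0 by rewrite pnatr_eq0 -lt0n cardsT; apply/card_gt0P; exists 1%g.
by apply: (scalerI n0); rewrite -e2 e1.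
Qed.

Lemma Hm_psd1 : psd (Hm - 1%:M). Proof. exact: Hl_psd. Qed.
Lemma Hm_psd : psd Hm.
Proof. by rewrite -[Hm](subrK 1%:M); apply: psdD; [exact: Hm_psd1 | exact: psd1]. Qed.
Lemma Hm_sub t : psd (Hm - adj (Yc t) *m Hm *m Yc t).
Proof.
have e := parseval; rewrite (bigD1 t) //= in e.
rewrite -{1}e addrC addrK; apply: psd_sumP => s _; apply: psd_adj; exact: Hm_psd.
Qed.

Definition Bd : nat := \sum_j Num.Def.archi_bound (Hm j j).

Lemma coef_small t k i j : (absz (Mint f g (coef u t ^+ k) i j) < Bd)%N.
Proof.
have h := psd_bound Hm_psd1 (psd_pow k (Hm_sub t)) i j.
rewrite /Yc -MCX /MC mxE in h.
apply: int_small.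
have hj : 0 <= Hm j j by apply: le_trans h; rewrite exprn_ge0.
apply: (le_lt_trans h); apply: (lt_le_trans (archi_boundP hj)).
by rewrite ler_nat /Bd (bigD1 j) //= leq_addr.
Qed.

Lemma coef_period t : exists i j, (i < j)%N /\ coef u t ^+ i = coef u t ^+ j.
Proof.
pose a := coef u t.
pose code (k : nat) : {ffun 'I_N.+1 * 'I_N.+1 -> 'I_(Bd + Bd).+1} :=
  [ffun ij => inord (absz (Mint f g (a ^+ k) ij.1 ij.2 + Bd%:Z)%R)].
pose K := #|{ffun 'I_N.+1 * 'I_N.+1 -> 'I_(Bd + Bd).+1}|.
pose h (x : 'I_K.+1) := code x.
have : ~~ injectiveb h.
  apply/negP => /injectiveP hi; have := leq_card h hi; by rewrite card_ord ltnn.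
move/injectivePn => [x [y nxy hxy]].
have eM : forall x y : nat, code x = code y -> a ^+ x = a ^+ y.
  move=> x' y' e; apply: (Mint_inj fD fK gK); apply/matrixP => i j.
  have := congr1 (fun F : {ffun 'I_N.+1 * 'I_N.+1 -> 'I_(Bd + Bd).+1} => val (F (i, j))) e; rewrite /code !ffunE /= !inordK.
  - have := coef_small t x' i j; have := coef_small t y' i j; rewrite -/a => h1 h2 e'; lia.
  - have := coef_small t y' i j; rewrite -/a => h1; lia.
  - have := coef_small t x' i j; rewrite -/a => h1; lia.
have := eM _ _ hxy.
have [lt|lt|eq] := ltngtP x y.
- by move=> e; exists x, y.
- by move=> e; exists y, x.
- by move: nxy; rewrite (val_inj eq) eqxx.
Qed.

Lemma coef_dich t : exists E, (0 < E)%N /\ (coef u t ^+ E = 0 \/ coef u t ^+ E = 1).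
Proof.
have [i [j [ij e]]] := coef_period t.
have [E [E0 hE]] := period_idem ij e.
by exists E; split => //; apply: idem.
Qed.

Lemma coef_unit : exists t E, (0 < E)%N /\ coef u t ^+ E = 1.
Proof.
apply: NNPP => hn.
have nil t : exists E, (coef u t * val t) ^+ E = 0.
  have [E [E0 [h|h]]] := coef_dich t.
    by exists E; rewrite exprMn h mul0r.
  by exfalso; apply: hn; exists t, E.
have [E hE] := nilp_sum (index_enum gT) nil.
rewrite -coefE in hE.
have h1 : u ^+ (m * E) = 1 by rewrite exprM um expr1n.
have h2 : u ^+ (m * E) = 0 by rewrite mulnC exprM hE expr0n eqn0Ngt m0.
by have := oner_neq0 R; rewrite -h1 h2 eqxx.
Qed.

Lemma coef1_one : coef u 1%g = 1 -> u = 1.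
Proof.
move=> h1.
have e := parseval; rewrite (bigD1 1%g) //= /Yc h1 MC1 adj1 mulmx1 mul1mx in e.
have S0 : \sum_(t | t != 1%g) adj (Yc t) *m Hm *m Yc t = 0.
  by apply: (addrI Hm); rewrite addr0; exact: e.
have Y0 t : t != 1%g -> Yc t = 0.
  move=> nt; apply: (psd_zero Hm_psd1) => v.
  have h0 : forall s, s != 1%g -> 0 <= qf (adj (Yc s) *m Hm *m Yc s) v.
    move=> s _; apply: psd_adj; exact: Hm_psd.
  have e0 : \sum_(s | s != 1%g) qf (adj (Yc s) *m Hm *m Yc s) v = 0.
    by rewrite -qf_sumP S0 /qf mulmx0 mul0mx mxE.
  exact: (psumr_eq0P h0 e0 (i := t) nt).
apply: coef_inj => t; rewrite coef1.
have [->|nt] := eqVneq t 1%g; first by rewrite h1.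
by apply: MC_inj; rewrite MC0; exact: Y0.
Qed.

End Tors.

Lemma val_order (s : gT) : val s ^+ #[s]%g = 1.
Proof. by rewrite -valX expg_order. Qed.

Lemma G_torsion x : G x -> exists k, (0 < k)%N /\ x ^+ k = 1.
Proof. move=> /inT [t <-]; exists #[t]%g; split; [exact: order_gt0 | exact: val_order]. Qed.

Lemma torsion_decomp u m : (0 < m)%N -> u ^+ m = 1 ->
  exists z x, [/\ A z, (exists E, (0 < E)%N /\ z ^+ E = 1), G x & u = z * x].
Proof.
move=> m0 um.
have [t0 [E [E0 hE]]] := coef_unit m0 um.
set a := coef u t0 in hE.
pose a' := a ^+ E.-1.
have aa' : a' * a = 1 by rewrite /a' -exprSr prednK.
pose s := (t0^-1)%g.
pose v := val s * (a' * u).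
pose k := (#[s]%g * E * m)%N.
have k0 : (0 < k)%N by rewrite /k !muln_gt0 order_gt0 E0 m0.
have vk : v ^+ k = 1.
  rewrite /v !exprMn.
  have -> : val s ^+ k = 1.
    by rewrite /k -mulnA exprM val_order expr1n.
  have -> : a' ^+ k = 1.
    rewrite /a' -exprM.
    have -> : (E.-1 * k = E * (E.-1 * #[s]%g * m))%N by rewrite /k; lia.
    by rewrite exprM hE expr1n.
  have -> : u ^+ k = 1.
    have -> : k = (m * (#[s]%g * E))%N by rewrite /k; lia.
    by rewrite exprM um expr1n.
  by rewrite !mul1r.
have c1 : coef v 1%g = 1.
  rewrite /v coef_mulT mulg1 /s invgK coef_mulA; first exact: aa'.
  by rewrite /a'; apply: AX; exact: coefA.
have v1 := coef1_one k0 vk c1.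
exists a, (val t0); split.
- exact: coefA.
- by exists E.
- exact: Gval.
- have e1 : val s * val t0 = 1 by rewrite -valM mulVg.
  have : a * val t0 * v = u.
    rewrite /v; transitivity ((a' * a) * (val s * val t0) * u); first by ring.
    by rewrite aa' e1 !mul1r.
  by rewrite v1 mulr1.
Qed.

End TL.

Unset Implicit Arguments.

Lemma A_intr (R : comNzRingType) (A : R -> Prop) : A 1 ->
  (forall x y, A x -> A y -> A (x - y)) -> forall z : int, A z%:~R.
Proof.
move=> A1 AB.
have An : forall n : nat, A n%:R.
  elim=> [|n IH]; first exact: A0.
  by rewrite -addn1 natrD; apply: AD.
case=> n; first exact: An.
by rewrite NegzE mulrNz; apply: AN => //; exact: An.
Qed.

Lemma TL_main (R : comNzRingType) (A G : R -> Prop) : is_order R -> connected_ring R -> in_D A G ->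
  (forall u m, (0 < m)%N -> u ^+ m = 1 ->
     exists z x, [/\ A z, (exists E, (0 < E)%N /\ z ^+ E = 1), G x & u = z * x]) /\
  (forall x, G x -> exists k, (0 < k)%N /\ x ^+ k = 1).
Proof.
move=> [n [f [fD [g fK gK]]]] [e1 [e2 [ne he]]] [[A1 AB AM] [G1 GM GV] [inj onto]].
have one0 : (1 : R) <> 0 by apply/eqP; exact: oner_neq0.
have idem : forall e : R, e * e = e -> e = 0 \/ e = 1.
  have [h0|h0] := (proj1 (he 0)) (mulr0 0); have [h1|h1] := (proj1 (he 1)) (mulr1 1).
  - by exfalso; apply: one0; rewrite h1 -h0.
  - by move=> e /he [] ->; [left | right].
  - by move=> e /he [] ->; [right | left].
  - by exfalso; apply: one0; rewrite h1 -h0.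
case: n f fD g fK gK => [|N] f fD g fK gK.
  exfalso; apply: one0; apply: (can_inj fK).
  by apply/rowP => -[].
have [l [ul lG]] := G_finite fD fK (@A_intr _ _ A1 AB) inj.
split.
- by move=> u m m0 um; exact: (torsion_decomp fD fK gK A1 AB AM inj onto G1 GM GV ul lG idem m0 um).
- by move=> x Gx; exact: (G_torsion G1 GM GV lG Gx).
Qed.

Lemma group_inj (R : comNzRingType) (B H : R -> Prop) : is_subring B -> nat_map_injective B H ->
  forall t : seq (R * R), gr_elt B H t -> gr_eval t = 0 ->
  forall h0, \sum_(p <- t | p.2 == h0) p.1 = 0.
Proof.
move=> [B1 BB BM] inj t tBH t0 h0.
have [hU|nhU] := boolP (h0 \in map snd t); last first.
  rewrite big1_seq // => p /andP [/eqP e pt].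
  by move: nhU; rewrite -e (map_f snd pt).
pose U := undup (map snd t).
pose L := [seq (\sum_(p <- t | p.2 == h) p.1, h) | h <- U].
have LBH : gr_elt B H L.
  move=> q /mapP [h hU' ->] /=; split.
    rewrite big_seq_cond; apply: (A_sum B1 BB) => p /andP [pt _]; exact: (tBH p pt).1.
  move: hU'; rewrite mem_undup => /mapP [p pt ->]; exact: (tBH p pt).2.
have Lu : uniq (map snd L).
  by rewrite -map_comp (eq_map (g := id)) ?map_id ?undup_uniq.
have Le : gr_eval L = 0.
  rewrite /gr_eval big_map.
  under eq_bigr => h _ do rewrite /= mulr_suml.
  have e1 : forall h, \sum_(p <- t | p.2 == h) p.1 * h = \sum_(p <- t | p.2 == h) p.1 * p.2.
    by move=> h; apply: eq_bigr => p /eqP ->.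
  under eq_bigr => h _ do rewrite e1 big_mkcond.
  rewrite exchange_big /= -[RHS]t0 /gr_eval big_seq [RHS]big_seq; apply: eq_bigr => p pt.
  rewrite -big_mkcond -big_filter.
  have -> : [seq h <- U | p.2 == h] = [:: p.2].
    rewrite -(filter_pred1_uniq (x := p.2) (undup_uniq (map snd t))); last by rewrite mem_undup map_f.
    by apply: eq_filter => h /=; rewrite eq_sym.
  by rewrite big_seq1.
apply: (inj L LBH Lu Le (\sum_(p <- t | p.2 == h0) p.1, h0)).
by apply/mapP; exists h0; rewrite ?mem_undup.
Qed.

Theorem lemma5p12 (R : comNzRingType) (A G B H : R -> Prop) :
  is_order R -> connected_ring R ->
  in_D A G -> in_D B H ->
  (forall h, H h -> G h) -> (forall a, A a -> B a) ->
  let J := fun x => G x /\ mu B x in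
  ((forall g, G g <-> exists j h, [/\ J j, H h & g = j * h]) /\
   (forall x, J x -> H x -> x = 1)) /\
  group_ring_iso B A J.
Proof.
move=> hord hconn hDA hDB HG AsB J.
have [TLA torA] := @TL_main _ _ _ hord hconn hDA.
have [TLB torB] := @TL_main _ _ _ hord hconn hDB.
case: hDA => [[A1 AB AM] [G1 GM GV] [injA ontoA]].
case: hDB => [sB [H1 HM HV] [injB ontoB]].
have [B1 BB BM] := sB.
have one0 : (1 : R) <> 0 by apply/eqP; exact: oner_neq0.
have hdec : forall g, G g -> exists j h, [/\ J j, H h & g = j * h].
  move=> g0 Gg; have [k [k0 gk]] := torA g0 Gg.
  have [z [x [Bz [E [E0 zE]] Hx e]]] := TLB g0 k k0 gk.
  exists z, x; split => //; split; last by split => //; exists E.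
  have [y [Gy xy]] := GV x (HG x Hx).
  have -> : z = g0 * y by rewrite e -mulrA xy mulr1.
  exact: GM.
split; [split|].
- move=> g0; split; first exact: hdec.
  by move=> [j [h [[Gj _] Hh ->]]]; apply: GM => //; apply: HG.
- move=> x [Gx [Bx _]] Hx; apply: NNPP => nx.
  pose t := [:: (x, 1); (-1, x)].
  have tBH : gr_elt B H t.
    move=> p; rewrite !inE => /orP [/eqP -> | /eqP ->] //=.
    have B0 : B 0 by rewrite -(subrr 1); exact: BB.
    by split => //; rewrite -sub0r; exact: BB.
  have tu : uniq (map snd t).
    rewrite /= inE andbT; apply/eqP => e; apply: nx; by rewrite e.
  have te : gr_eval t = 0 by rewrite /gr_eval !big_cons big_nil /= mulr1 mulN1r addr0 subrr.
  have := injB t tBH tu te (-1, x); rewrite !inE eqxx orbT => /(_ isT) /= /eqP.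
  by rewrite oppr_eq0 => /eqP.
split.
- move=> s sAJ us e p ps; apply: (injA s _ us e p ps) => q qs.
  by have [Aq [Gq _]] := sAJ q qs.
move=> r Br.
have [s [sAG er]] := ontoA r I.
have claim : forall s, gr_elt A G s -> exists t1 t2,
    [/\ gr_elt B H t1, gr_elt A J t2, gr_eval s = gr_eval t1 &
        \sum_(p <- t1 | p.2 == 1) p.1 = gr_eval t2].
  elim=> [|[a x] s' IH] sAG'.
    exists [::], [::]; split => //; by rewrite /gr_eval !big_nil.
  have [t1 [t2 [h1 h2 h3 h4]]] : exists t1 t2,
    [/\ gr_elt B H t1, gr_elt A J t2, gr_eval s' = gr_eval t1 &
        \sum_(p <- t1 | p.2 == 1) p.1 = gr_eval t2].
    by apply: IH => q qs; apply: sAG'; rewrite inE qs orbT.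
  have [Aa Gx] := sAG' (a, x) (mem_head _ _).
  have [j [h [Jj Hh ex]]] := hdec x Gx.
  exists ((a * j, h) :: t1), (if h == 1 then (a, j) :: t2 else t2); split.
  - move=> q; rewrite inE => /orP [/eqP -> | qt]; last exact: h1.
    by split => //; apply: BM; [apply: AsB | case: Jj => _ [] ].
  - case: (h == 1) => // q; rewrite ?inE => /orP [/eqP -> | qt]; last exact: h2.
    by [].
  - by rewrite /gr_eval !big_cons -/(gr_eval s') -/(gr_eval t1) h3 /= ex mulrA.
  - rewrite big_cons /=; case: (h == 1); last exact: h4.
    by rewrite h4 /gr_eval big_cons.
have [t1 [t2 [h1 h2 h3 h4]]] := claim s sAG.
exists t2; split => //.
have B0 : B 0 by rewrite -(subrr 1); exact: BB.
have Bmr : B (- r) by rewrite -sub0r; exact: BB.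
have tBH : gr_elt B H ((- r, 1) :: t1).
  move=> q; rewrite inE => /orP [/eqP -> | qt]; last exact: h1.
  by [].
have te : gr_eval ((- r, 1) :: t1) = 0.
  by rewrite /gr_eval big_cons -/(gr_eval t1) -h3 -er /= mulr1 addNr.
have := @group_inj _ _ _ sB injB _ tBH te 1.
rewrite big_cons /= eqxx h4 => /eqP; rewrite addrC addr_eq0 opprK => /eqP.
by [].
Qed.
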